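(* If $\Gamma\vdash t:\tau$ and $t\to t'$, then $\Gamma\vdash t':\tau$.
   Context: Types: $\rho,\tau::=\Diamond\mid\mathbf{B}\mid\tau\multimap\rho\mid\tau\otimes\rho\mid\tau\times\rho\mid\mathbf{L}(\tau)$. Raw terms: $r,s,t::=x^\tau\mid c\mid\lambda x^\tau.\,t\mid\langle t,s\rangle\mid ts\mid\{t\}$, where each variable $x^\tau$ carries a type (infinitely many variables of each type), application associates to the left, terms are identified up to renaming of bound variables ($\lambda$ is the only binder), and the constants $c$ with their types are $\mathsf{tt},\mathsf{ff}:\mathbf{B}$; $\mathsf{nil}_\tau:\mathbf{L}(\tau)$; $\mathsf{cons}_\tau:\Diamond\multimap\tau\multimap\mathbf{L}(\tau)\multimap\mathbf{L}(\tau)$; $\otimes_{\tau,\rho}:\tau\multimap\rho\multimap\tau\otimes\rho$. A context is a finite set of typed variables; $\Gamma_1,\Gamma_2$ denotes $\Gamma_1\cup\Gamma_2$ and presupposes $\Gamma_1\cap\Gamma_2=\emptyset$; $x^\tau$ also denotes $\{x^\tau\}$. The relation $\Gamma\vdash t:\tau$ is inductively defined by: (Var) $\Gamma,x^\tau\vdash x:\tau$; (Const) $\Gamma\vdash c:\tau$ for a constant $c$ of type $\tau$; ($\multimap^+$) from $\Gamma\cup\{x^\tau\}\vdash t:\rho$ infer $\Gamma\vdash\lambda x^\tau.t:\tau\multimap\rho$; ($\multimap^-$) from $\Gamma_1\vdash t:\tau\multimap\rho$ and $\Gamma_2\vdash s:\tau$ infer $\Gamma_1,\Gamma_2\vdash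 ts:\rho$; ($\times^+$) from $\Gamma\vdash t:\tau$ and $\Gamma\vdash s:\rho$ infer $\Gamma\vdash\langle t,s\rangle:\tau\times\rho$; ($\times^-_1$) from $\Gamma\vdash t:\tau\times\rho$ infer $\Gamma\vdash t\,\mathsf{tt}:\tau$; ($\times^-_0$) from $\Gamma\vdash t:\tau\times\rho$ infer $\Gamma\vdash t\,\mathsf{ff}:\rho$; ($\mathbf{B}^-$) from $\Gamma_1\vdash t:\mathbf{B}$, $\Gamma_2\vdash s:\tau$, $\Gamma_2\vdash r:\tau$ infer $\Gamma_1,\Gamma_2\vdash t\langle s,r\rangle:\tau$; ($\otimes^-$) from $\Gamma_1\vdash t:\tau\otimes\rho$ and $\Gamma_2,x^\tau,y^\rho\vdash s:\sigma$ infer $\Gamma_1,\Gamma_2\vdash t(\lambda x^\tau.\lambda y^\rho.s):\sigma$; ($\mathbf{L}^-$) from $\Gamma\vdash t:\mathbf{L}(\tau)$ and $\emptyset\vdash s:\Diamond\multimap\tau\multimap\rho\multimap\rho$ infer $\Gamma\vdash t\{s\}:\rho\multimap\rho$. Lists: a list with $n$ entries ($n\ge0$) is a term $\mathsf{cons}_\tau d_1a_1(\mathsf{cons}_\tau d_2a_2(\cdots(\mathsf{cons}_\tau d_na_n\,\mathsf{nil}_\tau)\cdots))$ where the $d_i$ are arbitrary terms of type $\Diamond$ and the $a_i$ arbitrary terms of type $\tau$ (for $n=0$ this is $\mathsf{nil}_\tau$). Conversions $\mapsto$: $(\lambda x.t)s\mapsto t[s/x]$; $\langle t,s\rangle\mathsf{tt}\mapsto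 t$; $\langle t,s\rangle\mathsf{ff}\mapsto s$; $\mathsf{tt}\langle t,s\rangle\mapsto t$; $\mathsf{ff}\langle t,s\rangle\mapsto s$; $\otimes_{\tau,\rho}ts(\lambda x^\tau.\lambda y^\rho.r)\mapsto r[t,s/x,y]$ (simultaneous substitution); $\mathsf{nil}_\tau\{t\}s\mapsto s$; $\mathsf{cons}_\tau d\,a\,\ell\{t\}s\mapsto t\,d\,a\,(\ell\{t\}s)$ provided $\ell$ is a list. The reduction relation $\to$ is inductively defined by: if $t\mapsto t'$ then $t\to t'$; if $t\to t'$ then $ts\to t's$; if $s\to s'$ then $ts\to ts'$ (so there is no reduction under $\lambda$, inside pairs $\langle\cdot,\cdot\rangle$, or inside braces $\{\cdot\}$). *)

(* Defs.v *)
From HB Require Import structures.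
From mathcomp Require Import all_boot.
From mathcomp Require Import finmap.

Set Implicit Arguments.
Unset Strict Implicit.
Unset Printing Implicit Defensive.

Local Open Scope fset_scope.

(* Types  rho, tau ::= Diamond | B | tau -o rho | tau (x) rho | tau x rho | L(tau) *)
Inductive ty : Type :=
  | TDiamond : ty
  | TBool : ty
  | TArr : ty -> ty -> ty
  | TTensor : ty -> ty -> ty
  | TProd : ty -> ty -> ty
  | TList : ty -> ty.

Fixpoint ty_enc (t : ty) : GenTree.tree nat :=
  match t with
  | TDiamond => GenTree.Node 0 [::]
  | TBool => GenTree.Node 1 [::]
  | TArr a b => GenTree.Node 2 [:: ty_enc a; ty_enc b]
  | TTensor a b => GenTree.Node 3 [:: ty_enc a; ty_enc b]
  | TProd a b => GenTree.Node 4 [:: ty_enc a; ty_enc b]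
  | TList a => GenTree.Node 5 [:: ty_enc a]
  end.

Fixpoint ty_dec (t : GenTree.tree nat) : option ty :=
  match t with
  | GenTree.Node 0 [::] => Some TDiamond
  | GenTree.Node 1 [::] => Some TBool
  | GenTree.Node 2 [:: a; b] =>
      if (ty_dec a, ty_dec b) is (Some a', Some b') then Some (TArr a' b') else None
  | GenTree.Node 3 [:: a; b] =>
      if (ty_dec a, ty_dec b) is (Some a', Some b') then Some (TTensor a' b') else None
  | GenTree.Node 4 [:: a; b] =>
      if (ty_dec a, ty_dec b) is (Some a', Some b') then Some (TProd a' b') else None
  | GenTree.Node 5 [:: a] =>
      if ty_dec a is Some a' then Some (TList a') else None
  | _ => None
  end.

Lemma ty_encK : pcancel ty_enc ty_dec.
Proof. by elim=> //= [a -> b ->|a -> b ->|a -> b ->|a ->]. Qed.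

HB.instance Definition _ := Countable.copy ty (pcan_type ty_encK).

(* A typed variable x^tau : a name together with its type.  There are
   infinitely many variables of each type. *)
Definition var := (nat * ty)%type.
Definition vty (x : var) : ty := x.2.

Definition ctx := {fset var}.

Inductive const : Type :=
  | Ctt : const
  | Cff : const
  | Cnil : ty -> const
  | Ccons : ty -> const
  | Ctens : ty -> ty -> const.

Definition const_ty (c : const) : ty :=
  match c with
  | Ctt => TBool
  | Cff => TBool
  | Cnil t => TList t
  | Ccons t => TArr TDiamond (TArr t (TArr (TList t) (TList t)))
  | Ctens t r => TArr t (TArr r (TTensor t r))
  end.

(* Raw terms up to renaming of bound variables, in locally nameless
   representation: bound variables are de Bruijn indices (BVar), free
   variables are typed names (FVar).  The binder Lam carries the type
   of the bound variable.  lam x t below is the paper's  \x^tau. t . *)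
Inductive term : Type :=
  | BVar : nat -> term
  | FVar : var -> term
  | Const : const -> term
  | Lam : ty -> term -> term
  | Pair : term -> term -> term
  | App : term -> term -> term
  | Brace : term -> term.

Fixpoint close_rec (k : nat) (x : var) (t : term) : term :=
  match t with
  | BVar n => BVar n
  | FVar y => if y == x then BVar k else FVar y
  | Const c => Const c
  | Lam a b => Lam a (close_rec k.+1 x b)
  | Pair a b => Pair (close_rec k x a) (close_rec k x b)
  | App a b => App (close_rec k x a) (close_rec k x b)
  | Brace a => Brace (close_rec k x a)
  end.

Definition lam (x : var) (t : term) : term := Lam (vty x) (close_rec 0 x t).

Fixpoint open_rec (k : nat) (u : term) (t : term) : term :=
  match t with
  | BVar n => if n == k then u else BVar n
  | FVar y => FVar y
  | Const c => Const c
  | Lam a b => Lam a (open_rec k.+1 u b)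
  | Pair a b => Pair (open_rec k u a) (open_rec k u b)
  | App a b => App (open_rec k u a) (open_rec k u b)
  | Brace a => Brace (open_rec k u a)
  end.

(* simultaneous substitution: index k+1 (outer binder) := u1, index k := u2 *)
Fixpoint open2_rec (k : nat) (u1 u2 : term) (t : term) : term :=
  match t with
  | BVar n => if n == k.+1 then u1 else if n == k then u2 else BVar n
  | FVar y => FVar y
  | Const c => Const c
  | Lam a b => Lam a (open2_rec k.+1 u1 u2 b)
  | Pair a b => Pair (open2_rec k u1 u2 a) (open2_rec k u1 u2 b)
  | App a b => App (open2_rec k u1 u2 a) (open2_rec k u1 u2 b)
  | Brace a => Brace (open2_rec k u1 u2 a)
  end.

(* The typing relation  Gamma |- t : tau .  Gamma1,Gamma2 is the union of
   two disjoint contexts. *)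
Inductive typing : ctx -> term -> ty -> Prop :=
  | T_Var (G : ctx) (x : var) :
      x \notin G -> typing (x |` G) (FVar x) (vty x)
  | T_Const (G : ctx) (c : const) :
      typing G (Const c) (const_ty c)
  | T_Lam (G : ctx) (x : var) (t : term) (r : ty) :
      typing (G `|` [fset x]) t r ->
      typing G (lam x t) (TArr (vty x) r)
  | T_App (G1 G2 : ctx) (t s : term) (a r : ty) :
      G1 `&` G2 = fset0 ->
      typing G1 t (TArr a r) -> typing G2 s a ->
      typing (G1 `|` G2) (App t s) r
  | T_Pair (G : ctx) (t s : term) (a r : ty) :
      typing G t a -> typing G s r -> typing G (Pair t s) (TProd a r)
  | T_Fst (G : ctx) (t : term) (a r : ty) :
      typing G t (TProd a r) -> typing G (App t (Const Ctt)) a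
  | T_Snd (G : ctx) (t : term) (a r : ty) :
      typing G t (TProd a r) -> typing G (App t (Const Cff)) r
  | T_If (G1 G2 : ctx) (t s u : term) (a : ty) :
      G1 `&` G2 = fset0 ->
      typing G1 t TBool -> typing G2 s a -> typing G2 u a ->
      typing (G1 `|` G2) (App t (Pair s u)) a
  | T_TensElim (G1 G2 : ctx) (t s : term) (x y : var) (c : ty) :
      G1 `&` G2 = fset0 -> x \notin G2 -> y \notin G2 -> x != y ->
      typing G1 t (TTensor (vty x) (vty y)) ->
      typing (G2 `|` [fset x; y]) s c ->
      typing (G1 `|` G2) (App t (lam x (lam y s))) c
  | T_ListElim (G : ctx) (t s : term) (a r : ty) :
      typing G t (TList a) ->
      typing fset0 s (TArr TDiamond (TArr a (TArr r r))) ->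
      typing G (App t (Brace s)) (TArr r r).

Inductive is_list (a : ty) : term -> Prop :=
  | L_nil : is_list a (Const (Cnil a))
  | L_cons (d e l : term) :
      (exists G, typing G d TDiamond) ->
      (exists G, typing G e a) ->
      is_list a l ->
      is_list a (App (App (App (Const (Ccons a)) d) e) l).

Inductive conv : term -> term -> Prop :=
  | C_beta (a : ty) (b s : term) :
      conv (App (Lam a b) s) (open_rec 0 s b)
  | C_fst (t s : term) : conv (App (Pair t s) (Const Ctt)) t
  | C_snd (t s : term) : conv (App (Pair t s) (Const Cff)) s
  | C_iftt (t s : term) : conv (App (Const Ctt) (Pair t s)) t
  | C_ifff (t s : term) : conv (App (Const Cff) (Pair t s)) s
  | C_tens (a r : ty) (t s u : term) :
      conv (App (App (App (Const (Ctens a r)) t) s) (Lam a (Lam r u)))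
           (open2_rec 0 t s u)
  | C_nil (a : ty) (t s : term) :
      conv (App (App (Const (Cnil a)) (Brace t)) s) s
  | C_cons (a : ty) (d e l t s : term) :
      is_list a l ->
      conv (App (App (App (App (App (Const (Ccons a)) d) e) l) (Brace t)) s)
           (App (App (App t d) e) (App (App l (Brace t)) s)).

(* One-step reduction: no reduction under lambda, in pairs, or in braces. *)
Inductive red : term -> term -> Prop :=
  | R_conv (t t' : term) : conv t t' -> red t t'
  | R_appl (t t' s : term) : red t t' -> red (App t s) (App t' s)
  | R_appr (t s s' : term) : red s s' -> red (App t s) (App t s').

(* Main.v *)
Require Import Defs.
From HB Require Import structures.
From mathcomp Require Import all_boot finmap zify.
Set Implicit Arguments.
Unset Strict Implicit.
Unset Printing Implicit Defensive.
Local Open Scope fset_scope.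

Fixpoint fv (t : term) : {fset var} :=
  match t with
  | BVar _ => fset0
  | FVar y => [fset y]
  | Const _ => fset0
  | Lam _ b => fv b
  | Pair a b => fv a `|` fv b
  | App a b => fv a `|` fv b
  | Brace a => fv a
  end.

Lemma subE (A B : {fset var}) : A `<=` B -> forall w, (w \in A) ==> (w \in B).
Proof. by move/fsubsetP => H w; apply/implyP/H. Qed.
Lemma eqE (A B : {fset var}) : A = B -> forall w, (w \in A) = (w \in B).
Proof. by move=> ->. Qed.

Ltac spec1 w :=
  repeat match goal with
  | H : is_true (fsubset _ _) |- _ => move: (subE H w); clear H
  | H : _ = _ |- _ => move: (eqE H w); clear H
  end.
Ltac spec2 w v :=
  repeat match goal with
  | H : is_true (fsubset _ _) |- _ => move: (subE H w) (subE H v); clear H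
  | H : _ = _ |- _ => move: (eqE H w) (eqE H v); clear H
  end.
Ltac revb :=
  repeat match goal with
  | H : is_true _ |- _ => move: H
  | H : @eq bool _ _ |- _ => move: H
  end.
Ltac bsplit :=
  cbn [fv] in *; rewrite ?inE /=;
  repeat (first [ done
  | match goal with
    | |- context[?a == ?a] => rewrite eqxx /=
    | H : ?a <> ?a |- _ => by case: H
    | |- context[?a == ?b] => case: (@eqP _ a b) => [?|?] //=; subst
    | |- context[?a \in ?B] => case: (a \in B) => //=
    end]).
Ltac sgoal w :=
  match goal with
  | |- is_true (fsubset _ _) => apply/fsubsetP => w; apply/implyP
  | |- _ = _ => apply/fsetP => w
  end.
Ltac ssolve := let w := fresh "w" in solve [sgoal w; spec1 w; revb; bsplit].
Ltac ssolve2 v := let w := fresh "w" in solve [sgoal w; spec2 w v; revb; bsplit].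
Ltac psolve v := solve [spec1 v; revb; bsplit].
Lemma fv_close k x t : fv (close_rec k x t) = fv t `\ x.
Proof.
elim: t k => [n|y|c|a b IH|a IHa b IHb|a IHa b IHb|a IH] k /=.
- ssolve.
- by case: ifP => /= E; ssolve.
- ssolve.
- by rewrite IH.
- by rewrite IHa IHb; ssolve.
- by rewrite IHa IHb; ssolve.
- by rewrite IH.
Qed.

Lemma fv_lam x t : fv (lam x t) = fv t `\ x.
Proof. exact: fv_close. Qed.

Lemma typing_fv G t T : typing G t T -> fv t `<=` G.
Proof.
elim=> {G t T} /=.
- move=> G x _; ssolve.
- by move=> *; exact: fsub0set.
- move=> G x t r _ H; rewrite ?fv_lam ?fv_close; ssolve.
- move=> G1 G2 t s a r _ _ H1 _ H2; ssolve.
- move=> G t s a r _ H1 _ H2; ssolve.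
- move=> G t a r _ H; ssolve.
- move=> G t a r _ H; ssolve.
- move=> G1 G2 t s u a _ _ H1 _ H2 _ H3; ssolve.
- move=> G1 G2 t s x y c _ _ _ _ _ H1 _ H2; rewrite ?fv_lam ?fv_close; ssolve.
- move=> G t s a r _ H1 _ H2; ssolve.
Qed.

Lemma typing_irr G t T : typing G t T -> forall G', fv t `<=` G' -> typing G' t T.
Proof.
elim=> {G t T} /=.
- move=> G x _ G' H.
  have xG : x \in G' by psolve x.
  rewrite -(fsetD1K xG); apply: T_Var; by rewrite !inE eqxx.
- by move=> *; apply: T_Const.
- move=> G x t r _ IH G' H; rewrite ?fv_close in H; apply: T_Lam; apply: IH; ssolve.
- move=> G1 G2 t s a r Hd Ht IHt Hs IHs G' H.
  have F1 := typing_fv Ht; have F2 := typing_fv Hs.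
  have -> : G' = (G' `\` fv s) `|` fv s by ssolve.
  apply: T_App; [ssolve| apply: IHt; ssolve | exact: IHs].
- move=> G t s a r _ IHt _ IHs G' H; apply: T_Pair; [apply: IHt|apply: IHs]; ssolve.
- move=> G t a r _ IH G' H; apply: T_Fst; apply: IH; ssolve.
- move=> G t a r _ IH G' H; apply: T_Snd; apply: IH; ssolve.
- move=> G1 G2 t s u a Hd Ht IHt Hs IHs Hu IHu G' H.
  have F1 := typing_fv Ht; have F2 := typing_fv Hs; have F3 := typing_fv Hu.
  have -> : G' = (G' `\` (fv s `|` fv u)) `|` (fv s `|` fv u) by ssolve.
  apply: T_If; [ssolve| apply: IHt; ssolve | apply: IHs; ssolve | apply: IHu; ssolve].
- move=> G1 G2 t s x y c Hd Hx Hy Hxy Ht IHt Hs IHs G' H.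
  rewrite ?fv_close in H.
  have F1 := typing_fv Ht; have F2 := typing_fv Hs.
  have -> : G' = (G' `\` (fv s `\ y `\ x)) `|` (fv s `\ y `\ x) by ssolve.
  apply: T_TensElim => //; [ssolve| by rewrite !inE eqxx | by rewrite !inE eqxx andbF
    | apply: IHt; ssolve | apply: IHs; ssolve].
- move=> G t s a r _ IH Hs _ G' H; apply: T_ListElim Hs; apply: IH; ssolve.
Qed.

Lemma invConst G c T : typing G (Const c) T -> T = const_ty c.
Proof. by move Et: (Const c) => t H; case: H Et => // G0 c0 [->]. Qed.

Lemma invPair G t s T : typing G (Pair t s) T ->
  exists a r, [/\ T = TProd a r, typing G t a & typing G s r].
Proof.
move Et: (Pair t s) => u H; case: H Et => // G0 t0 s0 a r H1 H2 [? ?]; subst.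
by exists a, r.
Qed.

Lemma invBrace G t T : typing G (Brace t) T -> False.
Proof. by move Et: (Brace t) => u H; case: H Et. Qed.

Lemma invLam G a b T : typing G (Lam a b) T ->
  exists x t0 r, [/\ a = vty x, b = close_rec 0 x t0, T = TArr (vty x) r
     & typing (G `|` [fset x]) t0 r].
Proof.
move Et: (Lam a b) => u H; case: H Et => // G0 x t0 r H [? ?]; subst.
by exists x, t0, r.
Qed.

Inductive app_inv (G : ctx) (t s : term) (T : ty) : Prop :=
| AI_App G1 G2 a of G = G1 `|` G2 & G1 `&` G2 = fset0 & typing G1 t (TArr a T) & typing G2 s a
| AI_Fst r of s = Const Ctt & typing G t (TProd T r)
| AI_Snd a of s = Const Cff & typing G t (TProd a T)
| AI_If G1 G2 s1 s2 of s = Pair s1 s2 & G = G1 `|` G2 & G1 `&` G2 = fset0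
    & typing G1 t TBool & typing G2 s1 T & typing G2 s2 T
| AI_Tens G1 G2 x y u of s = lam x (lam y u) & G = G1 `|` G2 & G1 `&` G2 = fset0
    & x \notin G2 & y \notin G2 & x != y
    & typing G1 t (TTensor (vty x) (vty y)) & typing (G2 `|` [fset x; y]) u T
| AI_List s0 a r of s = Brace s0 & T = TArr r r & typing G t (TList a)
    & typing fset0 s0 (TArr TDiamond (TArr a (TArr r r))).

Lemma invApp G t s T : typing G (App t s) T -> app_inv G t s T.
Proof.
move Et: (App t s) => u H; case: H Et => //.
- by move=> G1 G2 t0 s0 a r Hd H1 H2 [? ?]; subst; apply: AI_App H1 H2.
- by move=> G0 t0 a r H [? ?]; subst; apply: AI_Fst H.
- by move=> G0 t0 a r H [? ?]; subst; apply: AI_Snd H.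
- by move=> G1 G2 t0 s1 s2 a Hd H1 H2 H3 [? ?]; subst; apply: AI_If H1 H2 H3.
- by move=> G1 G2 t0 u0 x y c Hd Hx Hy Hxy H1 H2 [? ?]; subst; apply: AI_Tens H1 H2.
- by move=> G0 t0 s0 a r H1 H2 [? ?]; subst; apply: AI_List H1 H2.
Qed.

Fixpoint rn (f : var -> var) (t : term) : term :=
  match t with
  | BVar n => BVar n
  | FVar y => FVar (f y)
  | Const c => Const c
  | Lam a b => Lam a (rn f b)
  | Pair a b => Pair (rn f a) (rn f b)
  | App a b => App (rn f a) (rn f b)
  | Brace a => Brace (rn f a)
  end.

Definition sw (y z w : var) : var := if w == y then z else if w == z then y else w.

Lemma swK y z w : sw y z (sw y z w) = w.
Proof.
rewrite /sw; case: (w =P y) => [->|ny].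
  by rewrite eqxx; case: (z =P y) => [->|]; rewrite ?eqxx.
case: (w =P z) => [->|nz].
  by rewrite eqxx; case: (y =P y).
by rewrite (introF eqP ny) (introF eqP nz).
Qed.

Lemma sw_inj y z : injective (sw y z).
Proof. exact: (can_inj (swK y z)). Qed.

Lemma sw_vty y z w : vty z = vty y -> vty (sw y z w) = vty w.
Proof. by rewrite /sw => E; case: (w =P y) => [->|] //; case: (w =P z) => [->|]. Qed.

Lemma mem_sw y z (A : {fset var}) w : (w \in sw y z @` A) = (sw y z w \in A).
Proof.
apply/imfsetP/idP => [[v vA ->]|H]; first by rewrite swK.
by exists (sw y z w); rewrite ?swK.
Qed.

Lemma rn_close f k x t : injective f -> rn f (close_rec k x t) = close_rec k (f x) (rn f t).
Proof.
move=> fi; elim: t k => //= [y|a b IH|a IHa b IHb|a IHa b IHb|a IH] k.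
- by rewrite inj_eq //; case: eqP.
- by rewrite IH.
- by rewrite IHa IHb.
- by rewrite IHa IHb.
- by rewrite IH.
Qed.

Lemma rn_id f t : (forall w, w \in fv t -> f w = w) -> rn f t = t.
Proof.
elim: t => //= [y|a b IH|a IHa b IHb|a IHa b IHb|a IH] H.
- by rewrite H // inE.
- by rewrite IH.
- by rewrite IHa ?IHb // => w Hw; apply: H; rewrite inE Hw ?orbT.
- by rewrite IHa ?IHb // => w Hw; apply: H; rewrite inE Hw ?orbT.
- by rewrite IH.
Qed.

Lemma fv_rn f t : fv (rn f t) = f @` fv t.
Proof.
elim: t => /= [n|y|c|a b IH|a IHa b IHb|a IHa b IHb|a IH].
- by rewrite imfset0.
- by rewrite imfset_fset1.
- by rewrite imfset0.
- exact: IH.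
- by rewrite IHa IHb imfsetU.
- by rewrite IHa IHb imfsetU.
- exact: IH.
Qed.

Lemma typing_rn f G t T : (forall w, f (f w) = w) -> (forall w, vty (f w) = vty w) ->
  typing G t T -> typing (f @` G) (rn f t) T.
Proof.
move=> fK fv_ H; have fi : injective f by exact: (can_inj fK).
elim: H => {G t T} /=.
- move=> G x Hx; rewrite imfsetU1 -(fv_ x); apply: T_Var.
  by rewrite mem_imfset.
- by move=> *; apply: T_Const.
- move=> G x t r _ IH; rewrite rn_close // -(fv_ x).
  by apply: (T_Lam (x := f x)); rewrite -imfset_fset1 -imfsetU.
- move=> G1 G2 t s a r Hd _ IH1 _ IH2; rewrite imfsetU; apply: T_App IH1 IH2.
  by rewrite -imfsetI ?Hd ?imfset0 // => u v _ _; apply: fi.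
- by move=> *; apply: T_Pair.
- by move=> G t a r _ IH; apply: T_Fst IH.
- by move=> G t a r _ IH; apply: T_Snd IH.
- move=> G1 G2 t s u a Hd _ IH1 _ IH2 _ IH3; rewrite imfsetU; apply: T_If IH1 IH2 IH3.
  by rewrite -imfsetI ?Hd ?imfset0 // => u' v _ _; apply: fi.
- move=> G1 G2 t s x y c Hd Hx Hy Hxy _ IH1 _ IH2; rewrite imfsetU !rn_close //.
  rewrite -(fv_ x) -(fv_ y) in IH1 *.
  apply: (T_TensElim (x := f x) (y := f y)) IH1 _.
  + by rewrite -imfsetI ?Hd ?imfset0 // => u' v _ _; apply: fi.
  + by rewrite mem_imfset.
  + by rewrite mem_imfset.
  + by rewrite inj_eq.
  + by rewrite -imfset_fset2 -imfsetU.
- move=> G t s a r _ IH1 _ IH2; apply: T_ListElim IH1 _.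
  by rewrite imfset0 in IH2.
Qed.

Lemma close_sw k y z t : z \notin fv t -> close_rec k y t = close_rec k z (rn (sw y z) t).
Proof.
move=> Hz; transitivity (rn (sw y z) (close_rec k y t)).
  rewrite rn_id // => w; rewrite fv_close !inE /sw => /andP [/negPf -> Hw].
  by case: (w =P z) => // E; rewrite -E Hw in Hz.
by rewrite rn_close ?[sw y z y]/sw ?eqxx //; exact: sw_inj.
Qed.

Lemma alpha y z t : z \notin fv t -> vty z = vty y -> lam y t = lam z (rn (sw y z) t).
Proof. by move=> Hz Ev; rewrite /lam Ev -close_sw. Qed.

Lemma typing_alpha G y z t r : typing (G `|` [fset y]) t r -> z \notin fv t -> vty z = vty y ->
  typing (G `|` [fset z]) (rn (sw y z) t) r.
Proof.
move=> H Hz Ev; have F := typing_fv H.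
have := typing_rn (@swK y z) (sw_vty (y := y) (z := z) ^~ Ev) H.
move/typing_irr; apply; rewrite fv_rn; apply/fsubsetP => w; rewrite mem_sw /sw.
case: (w =P y) => [->|ny]; first by move=> H'; rewrite H' in Hz.
case: (w =P z) => [->|nz]; first by rewrite !inE eqxx orbT.
move=> Hw; move/fsubsetP: F => /(_ _ Hw); rewrite !inE.
by case/orP => [->|/eqP]. 
Qed.

Lemma fresh (A : {fset var}) (T : ty) : exists z : var, z \notin A /\ vty z = T.
Proof.
exists ((\max_(w <- A) w.1).+1, T); split => //; apply/negP => H.
have := @leq_bigmax_seq _ (enum_fset A) xpredT (fun w : var => w.1) _ H isT.
by rewrite /= ltnn.
Qed.

Lemma App' A B t s a r : typing A t (TArr a r) -> typing B s a ->
  fv t `&` fv s = fset0 -> typing (fv t `|` fv s) (App t s) r.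
Proof.
move=> Ht Hs D; exact: T_App D (typing_irr Ht (fsubset_refl _)) (typing_irr Hs (fsubset_refl _)).
Qed.

Lemma Pair' A B t s a r : typing A t a -> typing B s r ->
  typing (fv t `|` fv s) (Pair t s) (TProd a r).
Proof.
move=> Ht Hs; apply: T_Pair; [apply: (typing_irr Ht)|apply: (typing_irr Hs)]; ssolve.
Qed.

Lemma Lam' A z u r : typing A u r -> typing (fv (lam z u)) (lam z u) (TArr (vty z) r).
Proof. move=> H; apply: T_Lam; apply: (typing_irr H); rewrite fv_lam; ssolve. Qed.

Lemma If' A B C t s1 s2 a : typing A t TBool -> typing B s1 a -> typing C s2 a ->
  fv t `&` (fv s1 `|` fv s2) = fset0 ->
  typing (fv t `|` (fv s1 `|` fv s2)) (App t (Pair s1 s2)) a.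
Proof.
move=> Ht H1 H2 D; apply: T_If D (typing_irr Ht (fsubset_refl _)) _ _.
  by apply: (typing_irr H1); ssolve.
by apply: (typing_irr H2); ssolve.
Qed.

Lemma Tens' A B t a b body c : typing A t (TTensor a b) ->
  typing B (Lam a (Lam b body)) (TArr a (TArr b c)) ->
  fv t `&` fv body = fset0 ->
  typing (fv t `|` fv body) (App t (Lam a (Lam b body))) c.
Proof.
move=> Ht HB D.
have [x1 [t1 [r1 [Ea Eb1 Er1 H1]]]] := invLam HB.
case: Er1 => _ Er1; subst r1.
case: t1 Eb1 H1 => //= [y|b' body'].
  by case: ifP.
case=> Eb' Ebody H1; subst b' body.
have [x2 [t2 [r2 [Eb2 Eb3 Er2 H2]]]] := invLam H1.
case: Er2 => Er2 Ec; subst body' r2 b a.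
have F2 := typing_fv H2.
have Ht' : typing (fv t) t (TTensor (vty x1) (vty x2)) by apply: (typing_irr Ht).
rewrite !fv_close in D *.
have -> : Lam (vty x1) (Lam (vty x2) (close_rec 1 x1 (close_rec 0 x2 t2)))
   = lam x1 (lam x2 t2) by [].
case: (x1 =P x2) => [E12|N12].
- subst x2.
  have [z [Hz Ez]] := fresh (fv t2 `|` [fset x1]) (vty x1).
  rewrite (@alpha x1 z (lam x1 t2)); last by []; last first.
    by rewrite fv_lam; move: Hz; rewrite !inE; case: (z \in fv t2); rewrite ?andbT ?andbF.
  rewrite (@rn_id (sw x1 z) (lam x1 t2)); last first.
    move=> w; rewrite fv_lam !inE /sw => /andP [/negPf -> Hw].
    by case: (w =P z) => // E; move: Hz; rewrite -E !inE Hw.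
  apply: T_TensElim => //; try solve [psolve z | psolve x1].
  + by rewrite Ez.
  + apply: (typing_irr H2); ssolve.
- apply: T_TensElim => //; try solve [psolve x1 | psolve x2 | exact/eqP].
  apply: (typing_irr H2); ssolve.
Qed.

Fixpoint subst (x : var) (s t : term) : term :=
  match t with
  | BVar n => BVar n
  | FVar y => if y == x then s else FVar y
  | Const c => Const c
  | Lam a b => Lam a (subst x s b)
  | Pair a b => Pair (subst x s a) (subst x s b)
  | App a b => App (subst x s a) (subst x s b)
  | Brace a => Brace (subst x s a)
  end.

Fixpoint tsize (t : term) : nat :=
  match t with
  | BVar _ | FVar _ | Const _ => 1
  | Lam _ b => (tsize b).+1
  | Pair a b | App a b => (tsize a + tsize b).+1
  | Brace a => (tsize a).+1
  end.

Lemma tsize_close k x t : tsize (close_rec k x t) = tsize t.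
Proof. by elim: t k => //= [y|a b IH|a IHa b IHb|a IHa b IHb|a IH] k; rewrite ?IH ?IHa ?IHb //; case: ifP. Qed.

Lemma tsize_rn f t : tsize (rn f t) = tsize t.
Proof. by elim: t => //= [a b IH|a IHa b IHb|a IHa b IHb|a IH]; rewrite ?IH ?IHa ?IHb. Qed.

Lemma subst_fresh x s t : x \notin fv t -> subst x s t = t.
Proof.
elim: t => //= [y|a b IH|a IHa b IHb|a IHa b IHb|a IH] H.
- by move: H; rewrite inE eq_sym => /negPf ->.
- by rewrite IH.
- by rewrite IHa ?IHb //; move: H; rewrite inE negb_or => /andP [].
- by rewrite IHa ?IHb //; move: H; rewrite inE negb_or => /andP [].
- by rewrite IH.
Qed.

Lemma fv_subst x s t : fv (subst x s t) `<=` (fv t `\ x) `|` fv s.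
Proof.
elim: t => /= [n|y|c|a b IH|a IHa b IHb|a IHa b IHb|a IH] //.
- case: ifP => E; ssolve.
- ssolve.
- ssolve.
Qed.

Lemma close_fresh k z t : z \notin fv t -> close_rec k z t = t.
Proof.
elim: t k => //= [y|a b IH|a IHa b IHb|a IHa b IHb|a IH] k H.
- by move: H; rewrite inE eq_sym => /negPf ->.
- by rewrite IH.
- by rewrite IHa ?IHb //; move: H; rewrite inE negb_or => /andP [].
- by rewrite IHa ?IHb //; move: H; rewrite inE negb_or => /andP [].
- by rewrite IH.
Qed.

Lemma subst_close x s k z t : z != x -> z \notin fv s ->
  subst x s (close_rec k z t) = close_rec k z (subst x s t).
Proof.
move=> Nzx Hz; elim: t k => //= [y|a b IH|a IHa b IHb|a IHa b IHb|a IH] k.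
- case: (y =P z) => [E|Nyz] /=.
    by subst y; rewrite (negPf Nzx) /= eqxx.
  case: (y =P x) => [E|Nyx] /=; first by rewrite close_fresh.
  by case: (y =P z).
- by rewrite IH.
- by rewrite IHa IHb.
- by rewrite IHa IHb.
- by rewrite IH.
Qed.

Lemma subst_lam x s z t : z != x -> z \notin fv s -> subst x s (lam z t) = lam z (subst x s t).
Proof. by move=> *; rewrite /lam /= subst_close. Qed.

Lemma disj_subst x s t1 t2 : fv t1 `&` fv t2 = fset0 ->
  ((fv t1 `|` fv t2) `\ x) `&` fv s = fset0 ->
  fv (subst x s t1) `&` fv (subst x s t2) = fset0.
Proof.
move=> D1 D2; have S1 := fv_subst x s t1; have S2 := fv_subst x s t2.
case: (boolP (x \in fv t1)) => X1.
- have X2 : x \notin fv t2 by psolve x.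
  rewrite (subst_fresh s X2) in S2 *; ssolve.
- rewrite (subst_fresh s X1) in S1 *; ssolve.
Qed.

Lemma fv_rn_sw y z t : z \notin fv t -> fv (rn (sw y z) t) `<=` (fv t `\ y) `|` [fset z].
Proof.
move=> Hz; rewrite fv_rn; apply/fsubsetP => w; rewrite mem_sw /sw.
case: (w =P y) => [->|ny]; first by move=> H'; rewrite H' in Hz.
case: (w =P z) => [->|nz]; first by rewrite !inE eqxx orbT.
by move=> Hw; rewrite !inE Hw; move/eqP: ny => ->.
Qed.

Lemma subst_typ n : forall t G T x s D, tsize t <= n -> typing G t T -> typing D s (vty x) ->
  (fv t `\ x) `&` fv s = fset0 -> typing (fv (subst x s t)) (subst x s t) T.
Proof.
elim: n => [|n IHn] t G T x s D; first by case: t.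
move=> Hsz Ht Hs; move: Hsz; case: Ht => {t G T}.
- move=> G y Hy _ Hd /=; case: ifP => E.
    by move/eqP: E => E; subst y; apply: (typing_irr Hs).
  exact: (typing_irr (T_Var Hy)).
- by move=> G c _ _ /=; apply: T_Const.
- move=> G y t0 r H0 Hsz Hd; rewrite fv_lam in Hd.
  have [z [Hz Ez]] := fresh (fv t0 `|` fv s `|` [fset x; y]) (vty y).
  have Hz0 : z \notin fv t0 by psolve z.
  rewrite (alpha Hz0 Ez) subst_lam; [| psolve z | psolve z].
  rewrite -Ez; apply: Lam'.
  apply: (IHn _ _ _ _ _ _ _ (typing_alpha H0 Hz0 Ez) Hs).
    by move: Hsz; rewrite /= tsize_close tsize_rn.
  have F := fv_rn_sw y Hz0; ssolve.
- move=> G1 G2 t1 t2 a r HD H1 H2 Hsz Hd /=.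
  have F1 := typing_fv H1; have F2 := typing_fv H2.
  apply: App'.
  + apply: (IHn _ _ _ _ _ _ _ H1 Hs); [by move: Hsz => /=; lia | ssolve].
  + apply: (IHn _ _ _ _ _ _ _ H2 Hs); [by move: Hsz => /=; lia | ssolve].
  + apply: disj_subst; ssolve.
- move=> G t1 t2 a r H1 H2 Hsz Hd /=.
  apply: Pair'.
  + apply: (IHn _ _ _ _ _ _ _ H1 Hs); [by move: Hsz => /=; lia | ssolve].
  + apply: (IHn _ _ _ _ _ _ _ H2 Hs); [by move: Hsz => /=; lia | ssolve].
- move=> G t0 a r H0 Hsz Hd /=.
  have I : typing (fv (subst x s t0)) (subst x s t0) (TProd a r).
    apply: (IHn _ _ _ _ _ _ _ H0 Hs); [by move: Hsz => /=; lia | ssolve].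
  apply: (T_Fst (r := r)); apply: (typing_irr I); ssolve.
- move=> G t0 a r H0 Hsz Hd /=.
  have I : typing (fv (subst x s t0)) (subst x s t0) (TProd a r).
    apply: (IHn _ _ _ _ _ _ _ H0 Hs); [by move: Hsz => /=; lia | ssolve].
  apply: (T_Snd (a := a)); apply: (typing_irr I); ssolve.
- move=> G1 G2 t0 s1 s2 a HD H0 H1 H2 Hsz Hd /=.
  have F0 := typing_fv H0; have F1 := typing_fv H1; have F2 := typing_fv H2.
  apply: If'.
  + apply: (IHn _ _ _ _ _ _ _ H0 Hs); [by move: Hsz => /=; lia | ssolve].
  + apply: (IHn _ _ _ _ _ _ _ H1 Hs); [by move: Hsz => /=; lia | ssolve].
  + apply: (IHn _ _ _ _ _ _ _ H2 Hs); [by move: Hsz => /=; lia | ssolve].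
  + have := @disj_subst x s t0 (Pair s1 s2); apply; ssolve.
- move=> G1 G2 t0 u y1 y2 c HD Hy1 Hy2 Hy12 H1 H2 Hsz Hd.
  have F1 := typing_fv H1; have F2 := typing_fv H2.
  have HL : typing G2 (lam y1 (lam y2 u)) (TArr (vty y1) (TArr (vty y2) c)).
    apply: T_Lam; apply: T_Lam; apply: (typing_irr H2); ssolve.
  have FL := typing_fv HL.
  have IL := IHn (lam y1 (lam y2 u)) _ _ x s D _ HL Hs.
  have I0 := IHn t0 _ _ x s D _ H1 Hs.
  have DS := @disj_subst x s t0 (lam y1 (lam y2 u)).
  move: Hsz Hd IL I0 DS; rewrite /= !tsize_close => Hsz Hd IL I0 DS.
  apply: Tens'; [apply: I0| apply: IL| apply: DS]; try lia; ssolve.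
- move=> G t0 s0 a r H1 H2 Hsz Hd /=.
  have F2 := typing_fv H2.
  have X : x \notin fv s0 by psolve x.
  rewrite (subst_fresh s X).
  have I : typing (fv (subst x s t0)) (subst x s t0) (TList a).
    apply: (IHn _ _ _ _ _ _ _ H1 Hs); [by move: Hsz => /=; lia | ssolve].
  apply: T_ListElim H2; apply: (typing_irr I); ssolve.
Qed.

Fixpoint lc_at (k : nat) (t : term) : bool :=
  match t with
  | BVar n => n < k
  | FVar _ | Const _ => true
  | Lam _ b => lc_at k.+1 b
  | Pair a b | App a b => lc_at k a && lc_at k b
  | Brace a => lc_at k a
  end.

Lemma lc_close k x t : lc_at k t -> lc_at k.+1 (close_rec k x t).
Proof.
elim: t k => /= [n|y|c|a b IH|a IHa b IHb|a IHa b IHb|a IH] k //.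
- by move=> H; rewrite ltnS ltnW.
- by move=> _; case: ifP => /= _; rewrite ?ltnSn.
- exact: IH.
- by case/andP => /IHa -> /IHb ->.
- by case/andP => /IHa -> /IHb ->.
- exact: IH.
Qed.

Lemma typing_lc G t T : typing G t T -> lc_at 0 t.
Proof.
elim=> {G t T} //=.
- by move=> G x t r _ H; apply: lc_close.
- by move=> G1 G2 t s a r _ _ -> _ ->.
- by move=> G t s a r _ -> _ ->.
- by move=> G t a r _ ->.
- by move=> G t a r _ ->.
- by move=> G1 G2 t s u a _ _ -> _ -> _ ->.
- by move=> G1 G2 t s x y c _ _ _ _ _ -> _ H; do 2 apply: lc_close.
- by move=> G t s a r _ -> _ ->.
Qed.

Lemma open_close k x s t : lc_at k t -> open_rec k s (close_rec k x t) = subst x s t.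
Proof.
elim: t k => /= [n|y|c|a b IH|a IHa b IHb|a IHa b IHb|a IH] k //.
- by move=> H; rewrite (ltn_eqF H).
- by case: ifP => //= _; rewrite eqxx.
- by move=> H; rewrite IH.
- by case/andP => Ha Hb; rewrite IHa ?IHb.
- by case/andP => Ha Hb; rewrite IHa ?IHb.
- by move=> H; rewrite IH.
Qed.

Lemma lc_open_id k t u : lc_at k t -> forall j, k <= j -> open_rec j u t = t.
Proof.
elim: t k => /= [n|y|c|a b IH|a IHa b IHb|a IHa b IHb|a IH] k //.
- move=> H j Hj; case: eqP => // E; subst; by rewrite ltnNge Hj in H.
- by move=> H j Hj; rewrite (IH k.+1).
- by case/andP => Ha Hb j Hj; rewrite (IHa k) ?(IHb k).
- by case/andP => Ha Hb j Hj; rewrite (IHa k) ?(IHb k).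
- by move=> H j Hj; rewrite (IH k).
Qed.

Lemma open2_dec k t s u : lc_at 0 t -> open2_rec k t s u = open_rec k s (open_rec k.+1 t u).
Proof.
move=> Ht; elim: u k => /= [n|y|c|a b IH|a IHa b IHb|a IHa b IHb|a IH] k //.
- case: (n =P k.+1) => [E|N]; first by rewrite (lc_open_id _ Ht).
  case: (n =P k) => [E|N2] /=; first by rewrite E eqxx.
  by rewrite (introF eqP N2).
- by rewrite IH.
- by rewrite IHa IHb.
- by rewrite IHa IHb.
- by rewrite IH.
Qed.

Lemma beta A B a b a' r s : typing A (Lam a b) (TArr a' r) -> typing B s a' ->
  fv b `&` fv s = fset0 -> typing (fv b `|` fv s) (open_rec 0 s b) r.
Proof.
move=> H Hs D.
have [x [t0 [r0 [Ea Eb ET H0]]]] := invLam H.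
case: ET => Ea' Er; subst a' r0 b.
rewrite open_close; last exact: typing_lc H0.
rewrite fv_close in D *.
have := subst_typ (leqnn (tsize t0)) H0 Hs D.
move/typing_irr; apply; have := fv_subst x s t0; move=> F; ssolve.
Qed.

Lemma detArr t s A R G T : (forall G' T', typing G' t T' -> T' = TArr A R) ->
  typing G (App t s) T -> T = R /\ exists G1 G2,
    [/\ G = G1 `|` G2, G1 `&` G2 = fset0, typing G1 t (TArr A R) & typing G2 s A].
Proof.
move=> Hd H; case: (invApp H).
- move=> G1 G2 a E D H1 H2; have := Hd _ _ H1; case=> Ea ET; subst a T.
  by split => //; exists G1, G2.
- by move=> r _ H1; have := Hd _ _ H1.
- by move=> a _ H1; have := Hd _ _ H1.
- by move=> G1 G2 s1 s2 _ _ _ H1; have := Hd _ _ H1.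
- by move=> G1 G2 x y u _ _ _ _ _ _ H1; have := Hd _ _ H1.
- by move=> s0 a r _ _ H1; have := Hd _ _ H1.
Qed.

Lemma detList M t A G T : (forall G' T', typing G' M T' -> T' = TList A) ->
  typing G (App M (Brace t)) T -> exists R,
    [/\ T = TArr R R, typing G M (TList A) & typing fset0 t (TArr TDiamond (TArr A (TArr R R)))].
Proof.
move=> Hd H; case: (invApp H).
- by move=> G1 G2 a E D H1 H2; have := Hd _ _ H1.
- by [].
- by [].
- by [].
- by [].
- move=> s0 a r [E] ET H1 H2; subst s0; have := Hd _ _ H1; case=> Ea; subst a.
  by exists r.
Qed.

Lemma red_app u u' : red u u' -> exists a b, u = App a b.
Proof. case=> [t t' []|t t' s _|t s s' _]; intros; do 2 eexists; reflexivity. Qed.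

Lemma lam_ne_const x u c : lam x u <> Const c. Proof. by []. Qed.

Unset Implicit Arguments.
Theorem lemma3p5 (G : ctx) (t t' : term) (tau : ty) :
  typing G t tau -> red t t' -> typing G t' tau.
Proof.
move=> H Hr; elim: Hr G tau H => {t t'}.
- move=> t t' []; clear t t'.
  +
    move=> a b s G T H; case: (invApp H).
    * move=> G1 G2 a0 EG D H1 H2; subst G.
      have F1 := typing_fv H1; have F2 := typing_fv H2.
      have B : typing (fv b `|` fv s) (open_rec 0 s b) T by apply: (beta H1 H2); ssolve.
      apply: (typing_irr B); have FB := typing_fv B; ssolve.
    * by move=> r _ H1; have [? [? [? [_ _ ? _]]]] := invLam H1.
    * by move=> r _ H1; have [? [? [? [_ _ ? _]]]] := invLam H1.
    * by move=> G1 G2 s1 s2 _ _ _ H1; have [? [? [? [_ _ ? _]]]] := invLam H1.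
    * by move=> G1 G2 x y u _ _ _ _ _ _ H1; have [? [? [? [_ _ ? _]]]] := invLam H1.
    * by move=> s0 a0 r _ _ H1; have [? [? [? [_ _ ? _]]]] := invLam H1.
  +
    move=> t s G T H; case: (invApp H) => //.
    * by move=> G1 G2 a0 EG D H1 H2; have [? [? [? _]]] := invPair H1.
    * by move=> r _ H1; have [? [? [[-> _] ? _]]] := invPair H1.
  +
    move=> t s G T H; case: (invApp H) => //.
    * by move=> G1 G2 a0 EG D H1 H2; have [? [? [? _]]] := invPair H1.
    * by move=> r _ H1; have [? [? [[_ ->] _ ?]]] := invPair H1.
  +
    move=> t s G T H; case: (invApp H) => //.
    * by move=> G1 G2 a0 EG D H1 H2; have := invConst H1.
    * move=> G1 G2 s1 s2 [E1 E2] EG D H1 H2 H3; subst.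
      apply: (typing_irr H2); have := typing_fv H2; move=> F; ssolve.
  +
    move=> t s G T H; case: (invApp H) => //.
    * by move=> G1 G2 a0 EG D H1 H2; have := invConst H1.
    * move=> G1 G2 s1 s2 [E1 E2] EG D H1 H2 H3; subst.
      apply: (typing_irr H3); have := typing_fv H3; move=> F; ssolve.
  +
    move=> a r t s u G T H.
    have det0 : forall G' T', typing G' (Const (Ctens a r)) T' -> T' = TArr a (TArr r (TTensor a r)).
      by move=> G' T' /invConst.
    have det1 : forall G' T', typing G' (App (Const (Ctens a r)) t) T' -> T' = TArr r (TTensor a r).
      by move=> G' T' /(detArr det0) [].
    have det2 : forall G' T', typing G' (App (App (Const (Ctens a r)) t) s) T' -> T' = TTensor a r.
      by move=> G' T' /(detArr det1) [].
    case: (invApp H) => //.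
    * by move=> G1 G2 a0 EG D H1 H2; have := det2 _ _ H1.
    * move=> G1 G2 x y u0 E EG D Hx Hy Hxy H1 H2; subst G.
      have := det2 _ _ H1; case=> Ex Ey.
      have [_ [G3 [G4 [EG1 D1 H3 H4]]]] := detArr det1 H1; subst G1.
      have [_ [G5 [G6 [EG3 D3 H5 H6]]]] := detArr det0 H3; subst G3.
      have HL : typing G2 (lam x (lam y u0)) (TArr (vty x) (TArr (vty y) T)).
        apply: T_Lam; apply: T_Lam; apply: (typing_irr H2).
        have := typing_fv H2; move=> F; ssolve.
      rewrite -E Ex Ey in HL.
      have FL := typing_fv HL; have F4 := typing_fv H4; have F6 := typing_fv H6.
      have B1 := beta HL H6.
      have B1' : typing (fv (Lam r u) `|` fv t) (Lam r (open_rec 1 t u)) (TArr r T).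
        by apply: B1; ssolve.
      have FB := typing_fv B1'.
      have B2 := beta B1' H4.
      rewrite open2_dec; last exact: typing_lc H6.
      have B2' : typing (fv (open_rec 1 t u) `|` fv s) (open_rec 0 s (open_rec 1 t u)) T.
        by apply: B2; ssolve.
      apply: (typing_irr B2'); have FB2 := typing_fv B2'; ssolve.
  +
    move=> a t s G T H.
    have nilT : forall G' T', typing G' (App (Const (Cnil a)) (Brace t)) T' -> exists R, T' = TArr R R.
      move=> G' T' H'; case: (invApp H') => //.
      - by move=> G1 G2 a0 _ _ H1; have := invConst H1.
      - by move=> s0 a0 r _ -> _ _; exists r.
    case: (invApp H).
    * move=> G1 G2 a0 EG D H1 H2; subst G.
      have [R [Ea ET]] := nilT _ _ H1; subst a0 T.
      apply: (typing_irr H2); have := typing_fv H2; move=> F; ssolve.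
    * by move=> r _ H1; have [R] := nilT _ _ H1.
    * by move=> r _ H1; have [R] := nilT _ _ H1.
    * by move=> G1 G2 s1 s2 _ _ _ H1; have [R] := nilT _ _ H1.
    * by move=> G1 G2 x y u _ _ _ _ _ _ H1; have [R] := nilT _ _ H1.
    * by move=> s0 a0 r _ _ H1; have [R] := nilT _ _ H1.
  +
    move=> a d e l t s _ G T H.
    have det0 : forall G' T', typing G' (Const (Ccons a)) T' ->
       T' = TArr TDiamond (TArr a (TArr (TList a) (TList a))).
      by move=> G' T' /invConst.
    have det1 : forall G' T', typing G' (App (Const (Ccons a)) d) T' ->
       T' = TArr a (TArr (TList a) (TList a)).
      by move=> G' T' /(detArr det0) [].
    have det2 : forall G' T', typing G' (App (App (Const (Ccons a)) d) e) T' ->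
       T' = TArr (TList a) (TList a).
      by move=> G' T' /(detArr det1) [].
    have detM : forall G' T', typing G' (App (App (App (Const (Ccons a)) d) e) l) T' ->
       T' = TList a.
      by move=> G' T' /(detArr det2) [].
    have detB : forall G' T', typing G' (App (App (App (App (Const (Ccons a)) d) e) l) (Brace t)) T' ->
       exists R, T' = TArr R R.
      by move=> G' T' /(detList detM) [R [-> _ _]]; exists R.
    case: (invApp H); first last.
    * by move=> s0 a0 r _ _ H1; have [R] := detB _ _ H1.
    * by move=> G1 G2 x y u _ _ _ _ _ _ H1; have [R] := detB _ _ H1.
    * by move=> G1 G2 s1 s2 _ _ _ H1; have [R] := detB _ _ H1.
    * by move=> r _ H1; have [R] := detB _ _ H1.
    * by move=> r _ H1; have [R] := detB _ _ H1.
    move=> G1 G2 a0 EG D H1 H2; subst G.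
    have [R [ER HM Ht]] := detList detM H1.
    case: ER => Ea0 ET; subst a0 T.
    have [_ [Ga [Gl [EGa Da Hae Hl]]]] := detArr det2 HM; subst G1.
    have [_ [Gb [Ge [EGb Db Hb He]]]] := detArr det1 Hae; subst Ga.
    have [_ [Gc [Gd [EGc Dc Hc Hd]]]] := detArr det0 Hb; subst Gb.
    have Ft := typing_fv Ht; have Fd := typing_fv Hd; have Fe := typing_fv He.
    have Fl := typing_fv Hl; have Fs := typing_fv H2.
    have X1 := App' Ht Hd.
    have X1' : typing (fv t `|` fv d) (App t d) (TArr a (TArr R R)) by apply: X1; ssolve.
    have X2 := App' X1' He.
    have X2' : typing (fv (App t d) `|` fv e) (App (App t d) e) (TArr R R) by apply: X2; ssolve.
    have Y1 := T_ListElim Hl Ht.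
    have Y2 := App' Y1 H2.
    have Y2' : typing (fv (App l (Brace t)) `|` fv s) (App (App l (Brace t)) s) R by apply: Y2; ssolve.
    have Z := App' X2' Y2'.
    have Z' : typing (fv (App (App t d) e) `|` fv (App (App l (Brace t)) s))
       (App (App (App t d) e) (App (App l (Brace t)) s)) R by apply: Z; ssolve.
    apply: (typing_irr Z'); ssolve.
- move=> t t' s Hr IH G T H; case: (invApp H).
  + by move=> G1 G2 a EG D H1 H2; subst G; apply: T_App D (IH _ _ H1) H2.
  + by move=> r E H1; subst s; apply: T_Fst (IH _ _ H1).
  + by move=> a E H1; subst s; apply: T_Snd (IH _ _ H1).
  + by move=> G1 G2 s1 s2 E EG D H1 H2 H3; subst; apply: T_If D (IH _ _ H1) H2 H3.
  + by move=> G1 G2 x y u E EG D Hx Hy Hxy H1 H2; subst; apply: T_TensElim D Hx Hy Hxy (IH _ _ H1) H2.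
  + by move=> s0 a r E ET H1 H2; subst; apply: T_ListElim (IH _ _ H1) H2.
- move=> t s s' Hr IH G T H; case: (invApp H).
  + by move=> G1 G2 a EG D H1 H2; subst G; apply: T_App D H1 (IH _ _ H2).
  + by move=> r E H1; subst s; have [? [? ?]] := red_app Hr.
  + by move=> a E H1; subst s; have [? [? ?]] := red_app Hr.
  + by move=> G1 G2 s1 s2 E; subst s; have [? [? ?]] := red_app Hr.
  + by move=> G1 G2 x y u E; subst s; have [? [? ?]] := red_app Hr.
  + by move=> s0 a r E; subst s; have [? [? ?]] := red_app Hr.
Qed.
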